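(* Let $0\le a<b$, let $\alpha\in(0,1)$, and let $k:[a,b]\to\mathbb{R}$ be a continuous nonnegative map, differentiable on $[a,b]$, with $k(t)\neq 0$ and $k'(t)\neq 0$. Let $f:[a,b]\to\mathbb{R}$ be a continuous function such that $I^{\alpha}(f)$ exists. Then for all $t\in(a,b)$, $$D^{\alpha}\left[I^{\alpha}(f)\right](t)=f(t).$$
   Context: The $\alpha$-generalized fractional integral of $f$ is $I^{\alpha}(f)(t)=\int_a^t \frac{k'(x)f(x)}{(k(x))^{1-\alpha}}\,dx$ (as a possibly improper Riemann integral). For a function $F$ defined near $t\in(a,b)$ the generalized fractional derivative of order $\alpha$ is $$D^{\alpha}(F)(t):=\lim_{\varepsilon\to 0}\frac{F\left(t-k(t)+k(t)\,e^{\varepsilon\frac{(k(t))^{-\alpha}}{k'(t)}}\right)-F(t)}{\varepsilon}.$$ *)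

(* Defs.v *)
From Stdlib Require Import Reals.
From Coquelicot Require Import Coquelicot.
Open Scope R_scope.

Definition continuous_on_cc (f : R -> R) (a b : R) : Prop :=
  forall x, a <= x <= b ->
    filterlim f (within (fun y => a <= y <= b) (locally x)) (locally (f x)).

Definition has_derivative_on_cc (k dk : R -> R) (a b : R) : Prop :=
  forall x, a <= x <= b ->
    filterlim (fun y => (k y - k x) / (y - x))
      (within (fun y => a <= y <= b /\ y <> x) (locally x)) (locally (dk x)).

Definition Ialpha_integrand (k dk : R -> R) (alpha : R) (f : R -> R) (x : R) : R :=
  dk x * f x / Rpower (k x) (1 - alpha).

(* v = I^alpha(f)(t) = \int_a^t k'(x) f(x) / k(x)^(1-alpha) dx, as a (possibly
   improper at a) Riemann integral: v = lim_{s -> a+} \int_s^t ... . *)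
Definition is_Ialpha (k dk : R -> R) (alpha : R) (f : R -> R) (a t v : R) : Prop :=
  is_RInt_gen (Ialpha_integrand k dk alpha f) (at_right a) (at_point t) v.

Definition Dalpha_point (k dk : R -> R) (alpha t eps : R) : R :=
  t - k t + k t * exp (eps * Rpower (k t) (- alpha) / dk t).

Definition is_Dalpha (k dk : R -> R) (alpha : R) (F : R -> R) (t l : R) : Prop :=
  is_lim (fun eps => (F (Dalpha_point k dk alpha t eps) - F t) / eps) 0 l.

(* Main.v *)
Require Import Defs.
From Stdlib Require Import Reals Lra Lia ClassicalEpsilon FunctionalExtensionality.
From Coquelicot Require Import Coquelicot.
Open Scope R_scope.
Lemma ballR (x e y : R) : ball x e y <-> Rabs (y - x) < e.
Proof. split; intro H; exact H. Qed.

Lemma deriv_eps (k dk : R -> R) (a b : R) :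
  has_derivative_on_cc k dk a b ->
  forall x, a <= x <= b -> forall eps, 0 < eps -> exists d, 0 < d /\
    forall y, a <= y <= b -> y <> x -> Rabs (y - x) < d ->
      Rabs ((k y - k x) / (y - x) - dk x) < eps.
Proof.
  intros H x Hx eps Heps.
  destruct (H x Hx (ball (dk x) (mkposreal _ Heps)) (locally_ball _ _)) as [d Hd].
  exists d; split; [apply cond_pos|].
  intros y Hy Hyx Hyd. apply (Hd y). apply ballR; exact Hyd. split; assumption.
Qed.

Lemma cont_eps (f : R -> R) (a b : R) :
  continuous_on_cc f a b ->
  forall x, a <= x <= b -> forall eps, 0 < eps -> exists d, 0 < d /\
    forall y, a <= y <= b -> Rabs (y - x) < d -> Rabs (f y - f x) < eps.
Proof.
  intros H x Hx eps Heps.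
  destruct (H x Hx (ball (f x) (mkposreal _ Heps)) (locally_ball _ _)) as [d Hd].
  exists d; split; [apply cond_pos|].
  intros y Hy Hyd. apply (Hd y). apply ballR; exact Hyd. exact Hy.
Qed.

Lemma cont_interior (f : R -> R) (a b : R) :
  continuous_on_cc f a b -> forall x, a < x < b -> continuity_pt f x.
Proof.
  intros H x Hx eps Heps.
  destruct (cont_eps f a b H x ltac:(lra) eps Heps) as [d [Hd Hd']].
  exists (Rmin d (Rmin (x - a) (b - x))); split.
  { apply Rmin_glb_lt; [lra| apply Rmin_glb_lt; lra]. }
  intros y [_ Hy]. simpl in *. unfold R_dist in *.
  assert (H1 := Rmin_l d (Rmin (x - a) (b - x))).
  assert (H2 := Rmin_r d (Rmin (x - a) (b - x))).
  assert (H3 := Rmin_l (x - a) (b - x)).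
  assert (H4 := Rmin_r (x - a) (b - x)).
  apply Hd'. split; apply Rabs_def2 in Hy; lra. lra.
Qed.

Lemma deriv_interior (k dk : R -> R) (a b : R) :
  has_derivative_on_cc k dk a b -> forall x, a < x < b -> derivable_pt_lim k x (dk x).
Proof.
  intros H x Hx eps Heps.
  destruct (deriv_eps k dk a b H x ltac:(lra) eps Heps) as [d [Hd Hd']].
  assert (Hp : 0 < Rmin d (Rmin (x - a) (b - x))).
  { apply Rmin_glb_lt; [lra| apply Rmin_glb_lt; lra]. }
  exists (mkposreal _ Hp). intros h Hh Hhd. simpl in Hhd.
  assert (H1 := Rmin_l d (Rmin (x - a) (b - x))).
  assert (H2 := Rmin_r d (Rmin (x - a) (b - x))).
  assert (H3 := Rmin_l (x - a) (b - x)).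
  assert (H4 := Rmin_r (x - a) (b - x)).
  replace h with ((x + h) - x) at 2 by ring.
  apply Hd'.
  - apply Rabs_def2 in Hhd; lra.
  - lra.
  - replace (x + h - x) with h by ring; lra.
Qed.

Definition HQ (K dK : R -> R) (p q : R) := forall x, p <= x <= q -> forall eps, 0 < eps ->
  exists d, 0 < d /\ forall y, p <= y <= q -> y <> x -> Rabs (y - x) < d ->
      Rabs ((K y - K x) / (y - x) - dK x) < eps.

Lemma right_incr K dK p q : HQ K dK p q -> forall x, p <= x < q -> dK x > 0 ->
  exists y, x < y <= q /\ K y > K x.
Proof.
  intros H x Hx Hd.
  destruct (H x ltac:(lra) (dK x) Hd) as [d [Hd0 Hd']].
  set (y := x + Rmin (d/2) (q - x)).
  assert (H1 := Rmin_l (d/2) (q - x)). assert (H2 := Rmin_r (d/2) (q - x)).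
  assert (H3 : 0 < Rmin (d/2) (q - x)) by (apply Rmin_glb_lt; lra).
  exists y. unfold y. split; [lra|].
  assert (Hy := Hd' (x + Rmin (d/2) (q - x)) ltac:(lra) ltac:(lra)
                 ltac:(rewrite Rabs_pos_eq; lra)).
  apply Rabs_def2 in Hy. destruct Hy as [_ Hy].
  assert (Hq : 0 < (K (x + Rmin (d / 2) (q - x)) - K x) / (x + Rmin (d / 2) (q - x) - x)) by lra.
  replace (x + Rmin (d / 2) (q - x) - x) with (Rmin (d/2) (q-x)) in Hq by ring.
  assert (Hq' := Rmult_lt_0_compat _ _ Hq H3).
  unfold Rdiv in Hq'. rewrite Rmult_assoc, Rinv_l in Hq' by lra. lra.
Qed.

Lemma left_incr K dK p q : HQ K dK p q -> forall x, p < x <= q -> dK x < 0 ->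
  exists y, p <= y < x /\ K y > K x.
Proof.
  intros H x Hx Hd.
  destruct (H x ltac:(lra) (- dK x) ltac:(lra)) as [d [Hd0 Hd']].
  assert (H1 := Rmin_l (d/2) (x - p)). assert (H2 := Rmin_r (d/2) (x - p)).
  assert (H3 : 0 < Rmin (d/2) (x - p)) by (apply Rmin_glb_lt; lra).
  exists (x - Rmin (d/2) (x - p)). split; [lra|].
  assert (Hy := Hd' (x - Rmin (d/2) (x - p)) ltac:(lra) ltac:(lra)
                 ltac:(rewrite Rabs_left; lra)).
  apply Rabs_def2 in Hy. destruct Hy as [Hy _].
  set (z := x - Rmin (d / 2) (x - p)) in *.
  assert (z - x < 0). { unfold z. idtac. lra. }
  assert (E : K z - K x = ((K z - K x) / (z - x)) * (z - x)) by (field; lra).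
  nra.
Qed.

Lemma darboux_aux K dK p q : HQ K dK p q -> (forall x, p <= x <= q -> continuity_pt K x) ->
  (forall x, p <= x <= q -> dK x <> 0) -> p < q -> dK p > 0 -> dK q < 0 -> False.
Proof.
  intros H HC Hne Hpq Hp Hq.
  destruct (continuity_ab_maj K p q ltac:(lra) HC) as [m [Hm Hmr]].
  destruct (Rtotal_order (dK m) 0) as [Hlt|[Heq|Hgt]].
  - assert (p < m). { destruct (Req_dec m p) as [->|]; lra. }
    destruct (left_incr K dK p q H m ltac:(lra) Hlt) as [y [Hy HK]].
    assert (HH := Hm y ltac:(lra)). lra.
  - exact (Hne m Hmr Heq).
  - assert (m < q). { destruct (Req_dec m q) as [->|]; lra. }
    destruct (right_incr K dK p q H m ltac:(lra) Hgt) as [y [Hy HK]].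
    assert (HH := Hm y ltac:(lra)). lra.
Qed.

Lemma HQ_opp K dK p q : HQ K dK p q -> HQ (fun x => - K x) (fun x => - dK x) p q.
Proof.
  intros H x Hx eps Heps. destruct (H x Hx eps Heps) as [d [Hd Hd']].
  exists d; split; auto. intros y Hy Hyx Hyd.
  replace ((- K y - - K x) / (y - x) - - dK x) with (- ((K y - K x) / (y - x) - dK x))
    by (field; lra).
  rewrite Rabs_Ropp. auto.
Qed.

Lemma sign_const K dK p q : HQ K dK p q -> (forall x, p <= x <= q -> continuity_pt K x) ->
  (forall x, p <= x <= q -> dK x <> 0) -> p < q -> dK p * dK q > 0.
Proof.
  intros H HC Hne Hpq.
  assert (Hp := Hne p ltac:(lra)). assert (Hq := Hne q ltac:(lra)).
  destruct (Rtotal_order (dK p) 0) as [Hp'|[Hp'|Hp']]; [|lra|];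
  destruct (Rtotal_order (dK q) 0) as [Hq'|[Hq'|Hq']]; try lra.
  - nra.
  - exfalso. apply (darboux_aux (fun x => - K x) (fun x => - dK x) p q).
    + apply HQ_opp; auto.
    + intros; apply continuity_pt_opp; auto.
    + intros x Hx; specialize (Hne x Hx); lra.
    + auto. + lra. + lra.
  - exfalso. apply (darboux_aux K dK p q); auto.
  - nra.
Qed.
Lemma small_zero x : (forall eps, 0 < eps -> Rabs x < eps) -> x = 0.
Proof.
  intros H. destruct (Req_dec x 0) as [|Hx]; auto.
  assert (Hp : 0 < Rabs x) by (apply Rabs_pos_lt; auto).
  specialize (H _ Hp). lra.
Qed.

Lemma approx (G : R -> R) a u v :
  is_RInt_gen G (at_right a) (at_point u) v ->
  forall eps, 0 < eps -> exists d, 0 < d /\ forall s, a < s < a + d ->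
    exists y, is_RInt G s u y /\ Rabs (y - v) < eps.
Proof.
  intros H eps Heps.
  destruct (H (ball v (mkposreal _ Heps)) (locally_ball _ _)) as [Q R0 HQ HR Hp].
  destruct HQ as [d Hd]. exists d; split; [apply cond_pos|].
  intros s Hs. destruct (Hp s u) as [y [Hy1 Hy2]].
  - apply Hd; [apply ballR; rewrite Rabs_pos_eq; lra | lra].
  - exact HR.
  - exists y; split; auto.
Qed.

Lemma Fdiff (G F : R -> R) a t u :
  a < t -> a < u ->
  is_RInt_gen G (at_right a) (at_point t) (F t) ->
  is_RInt_gen G (at_right a) (at_point u) (F u) ->
  ex_RInt G t u /\ RInt G t u = F u - F t.
Proof.
  intros Ht Hu Ht' Hu'.
  assert (key : forall eps, 0 < eps -> ex_RInt G t u /\ Rabs (RInt G t u - (F u - F t)) < 2 * eps).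
  { intros eps Heps.
    destruct (approx G a t _ Ht' eps Heps) as [d1 [Hd1 H1]].
    destruct (approx G a u _ Hu' eps Heps) as [d2 [Hd2 H2]].
    set (m := Rmin (Rmin d1 d2) (Rmin (t - a) (u - a))).
    assert (Hm : 0 < m) by (unfold m; repeat apply Rmin_glb_lt; lra).
    assert (m <= d1 /\ m <= d2 /\ m <= t - a /\ m <= u - a).
    { unfold m. assert (X1 := Rmin_l (Rmin d1 d2) (Rmin (t - a) (u - a))).
      assert (X2 := Rmin_r (Rmin d1 d2) (Rmin (t - a) (u - a))).
      assert (X3 := Rmin_l d1 d2). assert (X4 := Rmin_r d1 d2).
      assert (X5 := Rmin_l (t-a) (u-a)). assert (X6 := Rmin_r (t-a) (u-a)). lra. }
    destruct (H1 (a + m/2) ltac:(lra)) as [y1 [Hy1 Ey1]].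
    destruct (H2 (a + m/2) ltac:(lra)) as [y2 [Hy2 Ey2]].
    assert (Ex : ex_RInt G t u).
    { apply ex_RInt_Chasles with (a + m/2).
      apply ex_RInt_swap; exists y1; auto. exists y2; auto. }
    split; auto.
    rewrite <- (RInt_Chasles G t (a + m/2) u).
    2: { apply ex_RInt_swap; exists y1; auto. }
    2: { exists y2; auto. }
    rewrite <- (opp_RInt_swap G (a + m/2) t) by (exists y1; auto).
    rewrite (is_RInt_unique _ _ _ _ Hy1), (is_RInt_unique _ _ _ _ Hy2).
    change (plus (opp y1) y2) with (- y1 + y2).
    apply Rabs_def2 in Ey1. apply Rabs_def2 in Ey2. apply Rabs_def1; lra. }
  split; [apply (key 1); lra|].
  apply Rminus_diag_uniq. apply small_zero. intros eps Heps.
  destruct (key (eps/2) ltac:(lra)) as [_ K]. lra.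
Qed.
Definition mvt_pt (k dk : R -> R) (a b x y : R) : R :=
  epsilon (inhabits 0) (fun c => x <= c <= y /\ (a < x -> y < b -> k y - k x = dk c * (y - x))).

Lemma mvt_pt_spec k dk a b :
  (forall x y, a < x -> x < y -> y < b -> exists c, x <= c <= y /\ k y - k x = dk c * (y - x)) ->
  forall x y, x <= y -> x <= mvt_pt k dk a b x y <= y /\
     (a < x -> y < b -> k y - k x = dk (mvt_pt k dk a b x y) * (y - x)).
Proof.
  intros H x y Hxy. unfold mvt_pt. apply epsilon_spec.
  destruct (Req_dec x y) as [<-|Hne].
  { exists x. split; [lra|]. intros; ring. }
  destruct (Rlt_dec a x) as [Hax|Hax]; [destruct (Rlt_dec y b) as [Hyb|Hyb]|].
  - destruct (H x y Hax ltac:(lra) Hyb) as [c Hc]. exists c. tauto.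
  - exists x. split; [lra|]. intros; contradiction.
  - exists x. split; [lra|]. intros; contradiction.
Qed.

Lemma sorted_last (l : list R) x : sorted Rle (x :: l) -> x <= seq.last x l.
Proof.
  revert x; induction l as [|y l IH]; intros x H; simpl; [lra|].
  destruct H as [H1 H2]. specialize (IH y H2). simpl in IH. lra.
Qed.

Lemma abs_same_sign D1 D2 s : s <> 0 -> D1 * s >= 0 -> D2 * s >= 0 ->
  Rabs (D1 + D2) = Rabs D1 + Rabs D2 /\ (D1 + D2) * s >= 0.
Proof.
  intros Hs H1 H2. destruct (Rlt_or_le 0 s) as [Hp|Hn].
  - assert (0 <= D1) by nra. assert (0 <= D2) by nra.
    rewrite !Rabs_pos_eq by lra. split; [ring| nra].
  - assert (s < 0) by lra. assert (D1 <= 0) by nra. assert (D2 <= 0) by nra.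
    rewrite !Rabs_left1 by lra. split; [ring| nra].
Qed.

Section RS.
Variables (k dk h : R -> R) (a b t eta del s p q : R).
Hypothesis HMVT : forall x y, a < x -> x < y -> y < b -> exists c, x <= c <= y /\ k y - k x = dk c * (y - x).
Hypothesis Hs : s <> 0.
Hypothesis Hsign : forall x, a < x < b -> dk x * s > 0.
Hypothesis Hh : forall x, Rabs (x - t) < del -> Rabs (h x - h t) <= eta.
Hypothesis Hp : a < p. Hypothesis Hq : q < b. Hypothesis Hpt : Rabs (p - t) < del.
Hypothesis Hqt : Rabs (q - t) < del.

Let c := mvt_pt k dk a b.

Lemma RS_est : forall l x, sorted Rle (x :: l) -> p <= x -> seq.last x l <= q ->
  Rabs (Riemann_sum (fun z => dk z * h z) (SF_seq_f2 c (x :: l)) - h t * (k (seq.last x l) - k x))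
    <= eta * Rabs (k (seq.last x l) - k x) /\ (k (seq.last x l) - k x) * s >= 0.
Proof.
  induction l as [|y l IH]; intros x Hsort Hpx Hlq.
  - simpl. replace (k x - k x) with 0 by ring.
    unfold Riemann_sum. simpl. rewrite Rmult_0_r.
    change (@zero R_ModuleSpace) with 0. rewrite Rminus_0_r, Rabs_R0.
    assert (0 <= eta) by (assert (H0 := Hh t ltac:(rewrite Rminus_diag, Rabs_R0; apply Rle_lt_trans with (Rabs (p - t)); [apply Rabs_pos|exact Hpt])); eapply Rle_trans; [apply Rabs_pos|exact H0]).
    split; nra.
  - simpl in Hlq. destruct Hsort as [Hxy Hsort'].
    assert (Hyl := sorted_last l y Hsort').
    specialize (IH y Hsort' ltac:(lra) Hlq).
    rewrite SF_cons_f2 by (simpl; lia).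
    rewrite Riemann_sum_cons. simpl seq.last. simpl SF_h. simpl seq.head.
    destruct (mvt_pt_spec k dk a b HMVT x y Hxy) as [Hc1 Hc2].
    fold c in Hc1, Hc2.
    specialize (Hc2 ltac:(lra) ltac:(lra)).
    set (cc := c x y) in *.
    change (plus (scal (y - x) (dk cc * h cc)) (Riemann_sum (fun z : R => dk z * h z) (SF_seq_f2 c (y :: l))))
      with ((y - x) * (dk cc * h cc) + Riemann_sum (fun z : R => dk z * h z) (SF_seq_f2 c (y :: l))).
    set (RS := Riemann_sum (fun z : R => dk z * h z) (SF_seq_f2 c (y :: l))) in *.
    set (L := seq.last y l) in *.
    assert (E1 : (y - x) * (dk cc * h cc) = (k y - k x) * h cc) by (rewrite Hc2; ring).
    assert (S1 : (k y - k x) * s >= 0).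
    { destruct (Req_dec x y) as [<-|Hne]; [nra|].
      rewrite Hc2. assert (dk cc * s > 0) by (apply Hsign; lra). nra. }
    destruct IH as [IH1 IH2].
    destruct (abs_same_sign (k y - k x) (k L - k y) s Hs S1 IH2) as [A1 A2].
    replace (k L - k x) with ((k y - k x) + (k L - k y)) by ring.
    split; [|exact A2].
    change (plus (scal (y - fst (x, cc)) (dk (snd (x, cc)) * h (snd (x, cc)))) RS) with ((y - x) * (dk cc * h cc) + RS).
    rewrite A1, E1.
    replace ((k y - k x) * h cc + RS - h t * (k y - k x + (k L - k y)))
      with ((k y - k x) * (h cc - h t) + (RS - h t * (k L - k y))) by ring.
    eapply Rle_trans; [apply Rabs_triang|].
    rewrite Rabs_mult.
    assert (Hcc : Rabs (h cc - h t) <= eta).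
    { apply Hh. apply Rabs_def2 in Hpt. apply Rabs_def2 in Hqt. apply Rabs_def1; lra. }
    assert (0 <= Rabs (k y - k x)) by apply Rabs_pos.
    nra.
Qed.

Lemma RInt_est I : p <= q -> is_RInt (fun z => dk z * h z) p q I ->
  Rabs (I - h t * (k q - k p)) <= eta * Rabs (k q - k p).
Proof.
  intros Hpq HI.
  destruct (Req_dec p q) as [<-|Hne].
  { assert (I = 0).
    { rewrite <- (is_RInt_unique _ _ _ _ HI). exact (RInt_point p (fun z : R => dk z * h z)). }
    subst. replace (k p - k p) with 0 by ring. rewrite Rabs_R0.
    replace (0 - h t * 0) with 0 by ring. rewrite Rabs_R0. lra. }
  apply Rnot_lt_le. intro Hlt.
  set (eps := Rabs (I - h t * (k q - k p)) - eta * Rabs (k q - k p)).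
  assert (Heps : 0 < eps) by (unfold eps; lra).
  destruct (HI (ball I (mkposreal _ Heps)) (locally_ball _ _)) as [d Hd].
  destruct (seq_step_unif_part_ex p q d) as [n Hn].
  destruct (unif_part p q n) as [|x l] eqn:E.
  { assert (H := head_unif_part (p + 1) p q n). rewrite E in H. simpl in H. lra. }
  assert (Hx : x = p). { assert (H := head_unif_part 0 p q n). rewrite E in H. exact H. }
  assert (Hl : seq.last x l = q). { assert (H := last_unif_part 0 p q n). rewrite E in H. exact H. }
  subst x.
  assert (Hsrt : sorted Rle (p :: l)). { rewrite <- E. apply unif_part_sort. lra. }
  destruct (RS_est l p Hsrt ltac:(lra) ltac:(lra)) as [R1 _].
  rewrite Hl in R1.
  assert (Hc : forall x y, x <= y -> x <= c x y <= y).
  { intros x y Hxy. apply (mvt_pt_spec k dk a b HMVT x y Hxy). }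
  destruct (Riemann_fine_unif_part c p q n Hc Hpq) as [_ [Hptd [Hh0 Hlast]]].
  rewrite E in Hptd, Hh0, Hlast.
  assert (Hb := Hd (SF_seq_f2 c (p :: l))).
  rewrite SF_lx_f2 in Hb, Hlast by (simpl; lia).
  rewrite Rmin_left, Rmax_right in Hb by lra.
  specialize (Hb Hn (conj Hptd (conj Hh0 Hlast))).
  rewrite sign_eq_1 in Hb by lra. change (scal 1 ?X) with (1 * X) in Hb. rewrite Rmult_1_l in Hb.
  idtac.
  set (RS := Riemann_sum (fun z : R => dk z * h z) (SF_seq_f2 c (p :: l))) in *.
  assert (Rabs (I - h t * (k q - k p)) <= Rabs (RS - I) + Rabs (RS - h t * (k q - k p))).
  { replace (I - h t * (k q - k p)) with (- (RS - I) + (RS - h t * (k q - k p))) by ring.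
    eapply Rle_trans; [apply Rabs_triang|]. rewrite Rabs_Ropp. lra. }
  assert (Hb' : Rabs (RS - I) < eps) by exact Hb.
  unfold eps in Hb'. lra.
Qed.
End RS.

Theorem mainTheorem6 (a b alpha : R) (k dk f F : R -> R)
  (Ha : 0 <= a) (Hab : a < b) (Halpha : 0 < alpha < 1)
  (Hkcont : continuous_on_cc k a b)
  (Hknn : forall x, a <= x <= b -> 0 <= k x)
  (Hkder : has_derivative_on_cc k dk a b)
  (Hkne0 : forall x, a <= x <= b -> k x <> 0)
  (Hdkne0 : forall x, a <= x <= b -> dk x <> 0)
  (Hfcont : continuous_on_cc f a b)
  (HF : forall t, a < t <= b -> is_Ialpha k dk alpha f a t (F t)) :
  forall t, a < t < b -> is_Dalpha k dk alpha F t (f t).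
Proof.
  intros t Ht.
  assert (Hkpos : forall x, a <= x <= b -> 0 < k x).
  { intros x Hx. specialize (Hknn x Hx). specialize (Hkne0 x Hx). lra. }
  set (h := fun x => f x / Rpower (k x) (1 - alpha)).
  assert (Geq : Ialpha_integrand k dk alpha f = (fun z => dk z * h z)).
  { apply functional_extensionality. intro z. unfold Ialpha_integrand, h, Rdiv. ring. }
  assert (HMVT : forall x y, a < x -> x < y -> y < b -> exists c, x <= c <= y /\ k y - k x = dk c * (y - x)).
  { intros x y Hx Hxy Hy.
    destruct (MVT_gen k x y dk) as [c [Hc1 Hc2]].
    - intros z Hz. rewrite Rmin_left, Rmax_right in Hz by lra.
      apply is_derive_Reals. apply (deriv_interior k dk a b Hkder). lra.
    - intros z Hz. rewrite Rmin_left, Rmax_right in Hz by lra.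
      apply (cont_interior k a b Hkcont). lra.
    - rewrite Rmin_left, Rmax_right in Hc1 by lra. exists c; auto. }
  assert (Hsign : forall x, a < x < b -> dk x * dk t > 0).
  { intros x Hx.
    assert (HQr : forall p q, a < p -> q < b -> HQ k dk p q).
    { intros p q Hp Hq z Hz eps Heps.
      destruct (deriv_eps k dk a b Hkder z ltac:(lra) eps Heps) as [d [Hd Hd']].
      exists d; split; auto. intros y Hy. apply Hd'. lra. }
    destruct (Rtotal_order x t) as [Hlt|[Heq|Hgt]].
    - apply (sign_const k dk x t); [apply HQr; lra | | | lra].
      + intros z Hz; apply (cont_interior k a b Hkcont); lra.
      + intros z Hz; apply Hdkne0; lra.
    - subst. assert (dk t <> 0) by (apply Hdkne0; lra). nra.
    - rewrite Rmult_comm. apply (sign_const k dk t x); [apply HQr; lra | | | lra].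
      + intros z Hz; apply (cont_interior k a b Hkcont); lra.
      + intros z Hz; apply Hdkne0; lra. }
  assert (Hdt : dk t <> 0) by (apply Hdkne0; lra).
  assert (Hhc : continuity_pt h t).
  { unfold h. apply (continuity_pt_div f (fun x => Rpower (k x) (1 - alpha))).
    - apply (cont_interior f a b Hfcont); lra.
    - apply (continuity_pt_comp k (fun y => Rpower y (1 - alpha))).
      + apply (cont_interior k a b Hkcont); lra.
      + apply derivable_continuous_pt.
        exists ((1 - alpha) * Rpower (k t) (1 - alpha - 1)).
        apply derivable_pt_lim_power. apply Hkpos; lra.
    - unfold Rpower. apply Rgt_not_eq, exp_pos. }
  assert (Hest : forall eta, 0 < eta -> exists d, 0 < d /\ forall u, a < u < b -> Rabs (u - t) < d ->
     Rabs (F u - F t - h t * (k u - k t)) <= eta * Rabs (k u - k t)).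
  { intros eta Heta.
    destruct (Hhc eta Heta) as [d [Hd Hd']].
    exists d; split; [lra|]. intros u Hu Hut.
    assert (Hh : forall x, Rabs (x - t) < d -> Rabs (h x - h t) <= eta).
    { intros x Hx. destruct (Req_dec x t) as [->|Hne].
      - rewrite Rminus_diag, Rabs_R0. lra.
      - left. apply (Hd' x). split; [split; [exact I| auto] | exact Hx]. }
    destruct (Fdiff (Ialpha_integrand k dk alpha f) F a t u ltac:(lra) ltac:(lra)
                (HF t ltac:(lra)) (HF u ltac:(lra))) as [Ex EF].
    rewrite Geq in Ex, EF.
    assert (Htt : Rabs (t - t) < d) by (rewrite Rminus_diag, Rabs_R0; lra).
    destruct (Rle_lt_dec t u) as [Htu|Hut'].
    - assert (HI := RInt_correct _ _ _ Ex).
      assert (R := RInt_est k dk h a b t eta d (dk t) t u HMVT Hdt Hsign Hh ltac:(lra) ltac:(lra)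
                    Htt Hut _ Htu HI).
      rewrite EF in R. exact R.
    - assert (Ex' := ex_RInt_swap _ _ _ Ex).
      assert (HI := RInt_correct _ _ _ Ex').
      assert (R := RInt_est k dk h a b t eta d (dk t) u t HMVT Hdt Hsign Hh ltac:(lra) ltac:(lra)
                    Hut Htt _ ltac:(lra) HI).
      rewrite <- (opp_RInt_swap _ _ _ Ex) in R. rewrite EF in R.
      change (opp (F u - F t)) with (- (F u - F t)) in R.
      replace (- (F u - F t) - h t * (k t - k u)) with (- (F u - F t - h t * (k u - k t))) in R by ring.
      replace (k t - k u) with (- (k u - k t)) in R by ring.
      rewrite !Rabs_Ropp in R. exact R. }
  set (phi := fun e => Dalpha_point k dk alpha t e).
  set (phi' := k t * (Rpower (k t) (- alpha) / dk t)).
  assert (Hphi : derivable_pt_lim phi 0 phi').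
  { apply is_derive_Reals. unfold phi, Dalpha_point, phi'. auto_derive; auto.
    rewrite !Rmult_0_l, exp_0. field. auto. }
  assert (Hphi0 : phi 0 = t).
  { unfold phi, Dalpha_point. rewrite Rmult_0_l. unfold Rdiv. rewrite Rmult_0_l, exp_0. ring. }
  set (L := dk t * phi').
  assert (Hkphi : derivable_pt_lim (fun e => k (phi e)) 0 L).
  { apply (derivable_pt_lim_comp phi k 0 phi' (dk t)); auto.
    rewrite Hphi0. apply (deriv_interior k dk a b Hkder). lra. }
  assert (HL : h t * L = f t).
  { unfold L, phi', h.
    assert (Hk := Hkpos t ltac:(lra)).
    replace (1 - alpha) with (1 + - alpha) by ring. rewrite Rpower_plus, Rpower_1 by auto.
    assert (Rpower (k t) (- alpha) <> 0) by (unfold Rpower; apply Rgt_not_eq, exp_pos).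
    field. repeat split; auto. lra. }
  assert (Hphic : continuity_pt phi 0) by (apply derivable_continuous_pt; exists phi'; exact Hphi).
  unfold is_Dalpha. apply is_lim_Reals. intros eps Heps.
  set (M := Rabs L + 1).
  assert (HM : 0 < M) by (unfold M; assert (H0 := Rabs_pos L); lra).
  destruct (Hest (eps / (2 * M)) ltac:(apply Rdiv_lt_0_compat; lra)) as [dE [HdE HE]].
  set (eps1 := Rmin 1 (eps / (2 * (Rabs (h t) + 1)))).
  assert (Hht := Rabs_pos (h t)).
  assert (He1 : 0 < eps1) by (unfold eps1; apply Rmin_glb_lt; [lra| apply Rdiv_lt_0_compat; lra]).
  destruct (Hkphi eps1 He1) as [d1 Hd1].
  set (r := Rmin dE (Rmin (t - a) (b - t))).
  assert (Hr : 0 < r) by (unfold r; repeat apply Rmin_glb_lt; lra).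
  destruct (Hphic r Hr) as [d2 [Hd2 Hd2']].
  exists (Rmin d1 d2). split; [apply Rmin_glb_lt; [apply cond_pos|lra]|].
  intros e [He Hed]. simpl in He, Hed. unfold R_dist in *. rewrite Rminus_0_r in Hed.
  assert (Hm1 := Rmin_l d1 d2). assert (Hm2 := Rmin_r d1 d2).
  assert (Hu : Rabs (phi e - t) < r).
  { rewrite <- Hphi0. apply Hd2'. split; [split; [exact I|auto]|]. simpl. unfold R_dist. rewrite Rminus_0_r. lra. }
  assert (Hr1 := Rmin_l dE (Rmin (t - a) (b - t))).
  assert (Hr2 := Rmin_r dE (Rmin (t - a) (b - t))).
  assert (Hr3 := Rmin_l (t - a) (b - t)). assert (Hr4 := Rmin_r (t - a) (b - t)).
  fold r in Hr1, Hr2.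
  set (u := phi e) in *.
  assert (Hu' : a < u < b) by (apply Rabs_def2 in Hu; lra).
  assert (HEu := HE u Hu' ltac:(lra)).
  assert (Hq := Hd1 e He ltac:(lra)).
  rewrite Rplus_0_l, Hphi0 in Hq. fold phi u in Hq.
  set (D := k u - k t) in *.
  set (X := F u - F t - h t * D) in *.
  assert (Hqe : Rabs (D / e - L) < eps1) by exact Hq.
  assert (Hq1 : Rabs (D / e) <= M).
  { unfold M. assert (eps1 <= 1) by apply Rmin_l.
    replace (D / e) with ((D / e - L) + L) by ring.
    eapply Rle_trans; [apply Rabs_triang|]. lra. }
  simpl. unfold R_dist.
  replace ((F (Dalpha_point k dk alpha t e) - F t) / e - f t)
    with (h t * (D / e - L) + X / e).
  2: { change (Dalpha_point k dk alpha t e) with u. rewrite <- HL. unfold X. field. auto. }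
  eapply Rle_lt_trans; [apply Rabs_triang|].
  rewrite Rabs_mult, Rabs_div by auto.
  assert (T1 : Rabs (h t) * Rabs (D / e - L) < eps / 2).
  { assert (eps1 <= eps / (2 * (Rabs (h t) + 1))) by apply Rmin_r.
    assert (Hc : 0 < eps / (2 * (Rabs (h t) + 1))) by (apply Rdiv_lt_0_compat; lra).
    apply Rle_lt_trans with (Rabs (h t) * (eps / (2 * (Rabs (h t) + 1)))).
    - apply Rle_trans with (Rabs (h t) * eps1).
      + apply Rmult_le_compat_l; lra.
      + apply Rmult_le_compat_l; lra.
    - apply Rlt_le_trans with ((Rabs (h t) + 1) * (eps / (2 * (Rabs (h t) + 1)))).
      + apply Rmult_lt_compat_r; lra.
      + right. field. lra. }
  assert (T2 : Rabs X / Rabs e <= eps / 2).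
  { assert (Hea : 0 < Rabs e) by (apply Rabs_pos_lt; auto).
    apply Rle_trans with (eps / (2 * M) * Rabs D / Rabs e).
    - unfold Rdiv. apply Rmult_le_compat_r; [left; apply Rinv_0_lt_compat; lra|]. exact HEu.
    - replace (eps / (2 * M) * Rabs D / Rabs e) with (eps / (2 * M) * Rabs (D / e))
        by (rewrite Rabs_div by auto; field; lra).
      apply Rle_trans with (eps / (2 * M) * M).
      + apply Rmult_le_compat_l; [left; apply Rdiv_lt_0_compat; lra| exact Hq1].
      + right. field. lra. }
  lra.
Qed.
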